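(* Let $G$ be a small category and let $X$ be a set equipped with a partial category action by $G$. Then $X$ admits a universal globalization: there exist a set $Y$ equipped with a global category action by $G$ and a $G$-function $i : X \to Y$ such that for every set $Z$ equipped with a global category action by $G$ and every $G$-function $j : X \to Z$ there is a unique $G$-function $k : Y \to Z$ with $j = k \circ i$.
   Context: Conventions: $G$ is a small category; objects are identified with their identity morphisms, so ${\rm ob}(G) \subseteq {\rm mor}(G)$. For $g \in {\rm mor}(G)$, $d(g)$ and $c(g)$ denote its domain and codomain, and $G^2 = \{(g,h) \in {\rm mor}(G)\times{\rm mor}(G) \mid d(g) = c(h)\}$. A partial set action of ${\rm mor}(G)$ on a set $X$ is a partial function ${\rm mor}(G) \times X \to X$ (a function defined on some subset of ${\rm mor}(G)\times X$), written $(g,x) \mapsto g\cdot x$ where defined. It is a partial category action by $G$ on $X$ if: (C1) for every $x \in X$ there is $e \in {\rm ob}(G)$ with $e\cdot x$ defined, and whenever $f \in {\rm ob}(G)$ and $f \cdot x$ is defined, $f\cdot x = x$; (C2) if $g \cdot x$ is defined then $d(g)\cdot x$ is defined; (C3) if $(g,h) \in G^2$ and $h\cdot x$ is defined, then $(gh)\cdot x$ is defined if and only if $g\cdot(h\cdot x)$ is defined, and in that case they are equal. The action is global if moreover (C4) whenever $d(g)\cdot x$ is defined, $g \cdot x$ is defined. If $X$ and $Y$ carry partial category actions by $G$, a $G$-function $i : X \to Y$ is a function such that whenever $g\cdot x$ is defined, $g\cdot i(x)$ is defined and $i(g\cdot x) = g \cdot i(x)$. *)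

(* Defs.v *)
(* Small categories in the "arrows-only" presentation:
   objects are identified with their identity morphisms (ob(G) ⊆ mor(G)),
   composition is a partial operation defined exactly on G^2. *)

Record SmallCat := {
  mor : Type;
  is_ob : mor -> Prop;
  dom : mor -> mor;
  cod : mor -> mor;
  comp : mor -> mor -> option mor;
  dom_ob : forall g, is_ob (dom g);
  cod_ob : forall g, is_ob (cod g);
  ob_dom : forall e, is_ob e -> dom e = e;
  ob_cod : forall e, is_ob e -> cod e = e;
  comp_defined : forall g h, (exists gh, comp g h = Some gh) <-> dom g = cod h;
  comp_dom : forall g h gh, comp g h = Some gh -> dom gh = dom h;
  comp_cod : forall g h gh, comp g h = Some gh -> cod gh = cod g;
  comp_id_r : forall g, comp g (dom g) = Some g;
  comp_id_l : forall g, comp (cod g) g = Some g;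
  comp_assoc : forall g h k gh hk,
      comp g h = Some gh -> comp h k = Some hk -> comp gh k = comp g hk
}.

Definition pact (G : SmallCat) (X : Type) := mor G -> X -> option X.

Definition defined {G : SmallCat} {X : Type} (a : pact G X) (g : mor G) (x : X) : Prop :=
  exists y, a g x = Some y.

Definition C1 {G : SmallCat} {X : Type} (a : pact G X) : Prop :=
  (forall x : X, exists e, is_ob G e /\ defined a e x) /\
  (forall (f : mor G) (x y : X), is_ob G f -> a f x = Some y -> y = x).

Definition C2 {G : SmallCat} {X : Type} (a : pact G X) : Prop :=
  forall (g : mor G) (x : X), defined a g x -> defined a (dom G g) x.

(* (C3): for (g,h) in G^2 with h.x defined, (gh).x is defined iff g.(h.x) is,
   and then they are equal; i.e. the two partial values coincide. *)
Definition C3 {G : SmallCat} {X : Type} (a : pact G X) : Prop :=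
  forall (g h gh : mor G) (x hx : X),
    dom G g = cod G h -> comp G g h = Some gh -> a h x = Some hx ->
    a gh x = a g hx.

Definition C4 {G : SmallCat} {X : Type} (a : pact G X) : Prop :=
  forall (g : mor G) (x : X), defined a (dom G g) x -> defined a g x.

Definition partial_cat_action {G : SmallCat} {X : Type} (a : pact G X) : Prop :=
  C1 a /\ C2 a /\ C3 a.

Definition global_cat_action {G : SmallCat} {X : Type} (a : pact G X) : Prop :=
  partial_cat_action a /\ C4 a.

Definition G_function {G : SmallCat} {X Y : Type} (a : pact G X) (b : pact G Y)
  (i : X -> Y) : Prop :=
  forall (g : mor G) (x y : X), a g x = Some y -> b g (i x) = Some (i y).

(* Main.v *)
Require Import Defs.
From Stdlib Require Import ClassicalEpsilon FunctionalExtensionality PropExtensionality ProofIrrelevance.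

Definition valid {G : SmallCat} {X : Type} (a : pact G X) (p : mor G * X) : Prop :=
  defined a (dom G (fst p)) (snd p).

Inductive Rel {G : SmallCat} {X : Type} (a : pact G X) : mor G * X -> mor G * X -> Prop :=
| Rrefl p : valid a p -> Rel a p p
| Rsym p q : Rel a p q -> Rel a q p
| Rtrans p q r : Rel a p q -> Rel a q r -> Rel a p r
| Rgen g h gh x hx : comp G g h = Some gh -> a h x = Some hx -> Rel a (gh, x) (g, hx)
| Robj e f x : is_ob G e -> is_ob G f -> defined a e x -> defined a f x -> Rel a (e, x) (f, x)
| Rcong h g g' x x' hg hg' : Rel a (g, x) (g', x') -> comp G h g = Some hg ->
    comp G h g' = Some hg' -> Rel a (hg, x) (hg', x').

Lemma ob_comp_l (G : SmallCat) f g fg : is_ob G f -> comp G f g = Some fg -> fg = g.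
Proof.
  intros Hf E.
  assert (Hd : dom G f = cod G g) by (apply (comp_defined G); eauto).
  rewrite (ob_dom G f Hf) in Hd. subst f. rewrite comp_id_l in E. congruence.
Qed.

Lemma valid_comp {G : SmallCat} {X : Type} (a : pact G X) g k gk x :
  valid a (k, x) -> comp G g k = Some gk -> valid a (gk, x).
Proof. unfold valid; simpl. intros V E. rewrite (comp_dom G _ _ _ E). exact V. Qed.

Lemma cod_act {G : SmallCat} {X : Type} (a : pact G X) g x x' :
  C3 a -> a g x = Some x' -> a (cod G g) x' = Some x'.
Proof.
  intros H3 E. rewrite <- (H3 (cod G g) g g x x'); auto.
  - rewrite ob_dom; auto. apply cod_ob.
  - apply comp_id_l.
Qed.

Lemma Rel_valid {G : SmallCat} {X : Type} (a : pact G X) :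
  partial_cat_action a -> forall p q, Rel a p q -> valid a p /\ valid a q.
Proof.
  intros [[H1a H1b] [H2 H3]] p q R. induction R; try tauto.
  - split; unfold valid; simpl.
    + rewrite (comp_dom G _ _ _ H). apply H2. eexists; eauto.
    + assert (Hd : dom G g = cod G h) by (apply (comp_defined G); eauto).
      rewrite Hd. eexists. eapply cod_act; eauto.
  - split; unfold valid; simpl; rewrite ob_dom; auto.
  - destruct IHR as [V1 V2]. split; eapply valid_comp; eauto.
Qed.

Definition Yt {G : SmallCat} {X : Type} (a : pact G X) :=
  {P : mor G * X -> Prop | exists p, valid a p /\ P = Rel a p}.

Lemma mem_rel {G : SmallCat} {X : Type} (a : pact G X) (y : Yt a) q q' :
  proj1_sig y q -> proj1_sig y q' -> Rel a q q'.
Proof.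
  destruct y as [P [p [v ->]]]; simpl. intros. eapply Rtrans; [apply Rsym|]; eauto.
Qed.

Lemma mem_closed {G : SmallCat} {X : Type} (a : pact G X) (y : Yt a) q q' :
  proj1_sig y q -> Rel a q q' -> proj1_sig y q'.
Proof. destruct y as [P [p [v ->]]]; simpl. intros. eapply Rtrans; eauto. Qed.

Lemma Y_ext {G : SmallCat} {X : Type} (a : pact G X) (y y' : Yt a) q :
  proj1_sig y q -> proj1_sig y' q -> y = y'.
Proof.
  intros A B.
  assert (E : proj1_sig y = proj1_sig y').
  { destruct y as [P [p [v HP]]], y' as [P' [p' [v' HP']]]; simpl in *; subst.
    apply functional_extensionality; intro r; apply propositional_extensionality;
    split; intro C.
    - eapply Rtrans; [exact B|]. eapply Rtrans; [apply Rsym; exact A| exact C].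
    - eapply Rtrans; [exact A|]. eapply Rtrans; [apply Rsym; exact B| exact C]. }
  destruct y as [P HP], y' as [P' HP']; simpl in E. subst P'. f_equal. apply proof_irrelevance.
Qed.

Lemma Y_nonempty {G : SmallCat} {X : Type} (a : pact G X) (y : Yt a) :
  exists q, proj1_sig y q.
Proof. destruct y as [P [p [v ->]]]; simpl. exists p. now constructor. Qed.

Lemma Y_of_valid {G : SmallCat} {X : Type} (a : pact G X) q :
  valid a q -> exists y : Yt a, proj1_sig y q.
Proof.
  intro v. exists (exist _ (Rel a q) (ex_intro _ q (conj v eq_refl))). simpl. now constructor.
Qed.

Lemma mem_valid {G : SmallCat} {X : Type} (a : pact G X) (y : Yt a) q :
  partial_cat_action a -> proj1_sig y q -> valid a q.
Proof.
  intros H. destruct y as [P [p [v ->]]]; simpl. intro R. apply (Rel_valid a H p q R).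
Qed.

Definition Act {G : SmallCat} {X : Type} (a : pact G X) h (y y' : Yt a) : Prop :=
  exists g x hg, proj1_sig y (g, x) /\ comp G h g = Some hg /\ proj1_sig y' (hg, x).

Lemma Act_fun {G : SmallCat} {X : Type} (a : pact G X) h y y1 y2 :
  Act a h y y1 -> Act a h y y2 -> y1 = y2.
Proof.
  intros (g & x & hg & A & E & B) (g' & x' & hg' & A' & E' & B').
  assert (R : Rel a (hg, x) (hg', x')) by (eapply Rcong; eauto; eapply mem_rel; eauto).
  eapply Y_ext; [| exact B']. eapply mem_closed; eauto.
Qed.

Definition bact {G : SmallCat} {X : Type} (a : pact G X) : pact G (Yt a) :=
  fun h y => match excluded_middle_informative (exists y', Act a h y y') with
             | left e => Some (proj1_sig (constructive_indefinite_description _ e))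
             | right _ => None end.

Lemma bact_some {G : SmallCat} {X : Type} (a : pact G X) h y y' :
  Act a h y y' -> bact a h y = Some y'.
Proof.
  intro A. unfold bact. destruct excluded_middle_informative as [e|n].
  - destruct constructive_indefinite_description as [z Z]; simpl. f_equal. eapply Act_fun; eauto.
  - exfalso; eauto.
Qed.

Lemma bact_inv {G : SmallCat} {X : Type} (a : pact G X) h y y' :
  bact a h y = Some y' -> Act a h y y'.
Proof.
  unfold bact. destruct excluded_middle_informative as [e|n]; [|discriminate].
  destruct constructive_indefinite_description as [z Z]; simpl. congruence.
Qed.

Lemma bact_global {G : SmallCat} {X : Type} (a : pact G X) :
  partial_cat_action a -> global_cat_action (bact a).
Proof.
  intro H. split; [split; [split|split]|].
  - intro y. destruct (Y_nonempty a y) as [[g x] M].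
    exists (cod G g). split; [apply cod_ob|]. exists y. apply bact_some.
    exists g, x, g. repeat split; auto. apply comp_id_l.
  - intros f y y' Hf E. apply bact_inv in E. destruct E as (g & x & fg & A & E & B).
    rewrite (ob_comp_l G f g fg Hf E) in B. eapply Y_ext; eauto.
  - intros g y [y' E]. apply bact_inv in E. destruct E as (k & x & gk & A & E & B).
    assert (Hd : dom G g = cod G k) by (apply (comp_defined G); eauto).
    exists y. apply bact_some. exists k, x, k. rewrite Hd. repeat split; auto. apply comp_id_l.
  - intros g h gh y hy Hd E1 E2. apply bact_inv in E2.
    destruct E2 as (k & x & hk & A & E & B).
    assert (Hd2 : dom G g = cod G hk) by (rewrite (comp_cod G _ _ _ E); auto).
    destruct (proj2 (comp_defined G g hk) Hd2) as [ghk E3].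
    assert (V : valid a (ghk, x)).
    { eapply valid_comp; [|exact E3]. eapply valid_comp; [|exact E]. eapply mem_valid; eauto. }
    destruct (Y_of_valid a _ V) as [y'' M].
    rewrite (bact_some a gh y y''), (bact_some a g hy y''); auto.
    + exists hk, x, ghk. auto.
    + exists k, x, ghk. repeat split; auto.
      rewrite (comp_assoc G g h k gh hk E1 E). auto.
  - intros g y [y' E]. apply bact_inv in E. destruct E as (k & x & gk & A & E & B).
    assert (Hd : dom G (dom G g) = cod G k) by (apply (comp_defined G); eauto).
    rewrite ob_dom in Hd by apply dom_ob.
    destruct (proj2 (comp_defined G g k) Hd) as [gk' E'].
    assert (V : valid a (gk', x)) by (eapply valid_comp; eauto; eapply mem_valid; eauto).
    destruct (Y_of_valid a _ V) as [y'' M]. exists y''. apply bact_some.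
    exists k, x, gk'. auto.
Qed.

Lemma F_rel {G : SmallCat} {X Z : Type} (a : pact G X) (c : pact G Z) (j : X -> Z) :
  partial_cat_action a -> global_cat_action c -> G_function a c j ->
  forall p q, Rel a p q -> c (fst p) (j (snd p)) = c (fst q) (j (snd q)).
Proof.
  intros Ha Hc Hj p q R.
  pose proof (proj2 (proj1 Ha)) as ObA.
  destruct Hc as [[[C1a C1b] [C2 C3]] C4].
  induction R; simpl in *; try congruence.
  - assert (Hd : dom G g = cod G h) by (apply (comp_defined G); eauto).
    apply (C3 g h gh (j x) (j hx) Hd H); auto.
  - destruct H1 as [x1 E1], H2 as [x2 E2].
    pose proof (ObA _ _ _ H E1); pose proof (ObA _ _ _ H0 E2); subst.
    rewrite (Hj _ _ _ E1), (Hj _ _ _ E2). auto.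
  - assert (V : valid a (g, x)) by (apply (Rel_valid a Ha _ _ R)).
    destruct V as [x1 E1]. simpl in E1.
    destruct (C4 g (j x)) as [z Ez]. { eexists. apply Hj. eauto. }
    assert (Hd : dom G h = cod G g) by (apply (comp_defined G); eauto).
    assert (Hd' : dom G h = cod G g') by (apply (comp_defined G); eauto).
    rewrite (C3 h g hg (j x) z Hd H Ez).
    rewrite (C3 h g' hg' (j x') z Hd' H0); auto. congruence.
Qed.

Theorem theorem1p4 (G : SmallCat) (X : Type) (a : pact G X) :
  partial_cat_action a ->
  exists (Y : Type) (b : pact G Y) (i : X -> Y),
    global_cat_action b /\ G_function a b i /\
    forall (Z : Type) (c : pact G Z), global_cat_action c ->
      forall j : X -> Z, G_function a c j ->
        exists k : Y -> Z,
          (G_function b c k /\ (forall x, j x = k (i x))) /\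
          (forall k' : Y -> Z,
             G_function b c k' /\ (forall x, j x = k' (i x)) -> k' = k).
Proof.
  intro Ha. pose proof Ha as Ha'. destruct Ha' as [[H1a H1b] [H2 H3]].
  pose (e := fun x => proj1_sig (constructive_indefinite_description _ (H1a x))).
  assert (eP : forall x, is_ob G (e x) /\ defined a (e x) x).
  { intro x. unfold e. destruct constructive_indefinite_description; simpl; auto. }
  assert (ev : forall x, valid a (e x, x)).
  { intro x. unfold valid; simpl. rewrite ob_dom; apply eP. }
  pose (i := fun x => exist (fun P => exists p, valid a p /\ P = Rel a p)
                        (Rel a (e x, x)) (ex_intro _ (e x, x) (conj (ev x) eq_refl)) : Yt a).
  assert (iM : forall x g, defined a (dom G g) x -> proj1_sig (i x) (dom G g, x)).
  { intros x g D. simpl. apply Robj; try apply eP; auto. apply dom_ob. }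
  assert (iA : forall x g y, defined a (dom G g) x -> proj1_sig y (g, x) -> bact a g (i x) = Some y).
  { intros x g y D M. apply bact_some. exists (dom G g), x, g. repeat split; auto.
    apply comp_id_r. }
  exists (Yt a), (bact a), i. split; [apply bact_global; auto|]. split.
  - intros g x x' E. apply iA. { apply H2. eexists; eauto. }
    simpl. eapply Rtrans; [|apply Rsym; apply (Rgen a (cod G g) g g x x'); auto; apply comp_id_l].
    apply Robj; try apply eP; try apply cod_ob. eexists. eapply cod_act; eauto.
  - intros Z c Hc j Hj.
    assert (Fdef : forall q, valid a q -> exists z, c (fst q) (j (snd q)) = Some z).
    { intros [g x] [x1 E1]. simpl in *. destruct Hc as [_ C4]. apply C4.
      eexists. apply Hj. eauto. }
    assert (kex : forall y : Yt a, exists z, exists q, proj1_sig y q /\ c (fst q) (j (snd q)) = Some z).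
    { intro y. destruct (Y_nonempty a y) as [q M].
      destruct (Fdef q) as [z Ez]. { eapply mem_valid; eauto. } eauto. }
    pose (k := fun y => proj1_sig (constructive_indefinite_description _ (kex y))).
    assert (kspec : forall y q, proj1_sig y q -> c (fst q) (j (snd q)) = Some (k y)).
    { intros y q M. unfold k. destruct constructive_indefinite_description as [z [q0 [M0 E0]]].
      simpl. rewrite <- E0. symmetry. eapply F_rel; eauto. eapply mem_rel; eauto. }
    exists k. split; [split|].
    + intros g y y' E. apply bact_inv in E. destruct E as (k0 & x & gk & A & E & B).
      pose proof (kspec _ _ A) as K1. pose proof (kspec _ _ B) as K2. simpl in *.
      destruct Hc as [[_ [_ C3]] _].
      assert (Hd : dom G g = cod G k0) by (apply (comp_defined G); eauto).
      rewrite <- (C3 g k0 gk (j x) (k y) Hd E K1). auto.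
    + intro x. pose proof (kspec (i x) (e x, x)) as K. simpl in K.
      assert (M : Rel a (e x, x) (e x, x)) by (constructor; auto).
      specialize (K M). destruct (proj2 (eP x)) as [x1 E1].
      pose proof (H1b _ _ _ (proj1 (eP x)) E1); subst x1.
      rewrite (Hj _ _ _ E1) in K. congruence.
    + intros k' [Hk' Hjk]. apply functional_extensionality. intro y.
      destruct (Y_nonempty a y) as [[g x] M].
      assert (D : defined a (dom G g) x) by (apply (mem_valid a y _ Ha M)).
      pose proof (Hk' _ _ _ (iA x g y D M)) as K1. rewrite <- Hjk in K1.
      pose proof (kspec _ _ M) as K2. simpl in K2. congruence.
Qed.
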